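(* Let $Y:(\mathbb S^{d-1})^k\to\mathbb R$ be a $k$-positive definite kernel and let $\mu\in\mathcal P(\mathbb S^{d-1})$ satisfy $I_Y(\mu)=0$. Then $\mu$ minimizes $I_Y$ over $\mathcal P(\mathbb S^{d-1})$.
   Context: $\mathbb S^{d-1}$ is the unit sphere in $\mathbb R^d$, $\mathcal P(\mathbb S^{d-1})$ its Borel probability measures, $I_Y(\mu)=\int\cdots\int Y(x_1,\ldots,x_k)\,d\mu(x_1)\cdots d\mu(x_k)$. A continuous kernel $Y$ symmetric in its first two variables is $k$-positive definite if for all fixed $z_3,\ldots,z_k\in\mathbb S^{d-1}$ and every finite signed Borel measure $\nu$ on $\mathbb S^{d-1}$, $\int\int Y(x,y,z_3,\ldots,z_k)\,d\nu(x)d\nu(y)\ge0$. *)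

(* Defs.v *)
From HB Require Import structures.
From mathcomp Require Import all_boot all_order all_algebra.
From mathcomp Require Import all_classical all_reals all_analysis.
Set Implicit Arguments. Unset Strict Implicit. Unset Printing Implicit Defensive.
Import Order.TTheory GRing.Theory Num.Theory.
Import numFieldNormedType.Exports.
Local Open Scope classical_set_scope.
Local Open Scope ring_scope.

(* R^d is given its Borel
   sigma-algebra: the sigma-algebra generated by the open sets (the matrix
   topology of MathComp-Analysis is the product topology, i.e. the Euclidean
   one). *)
Notation Rd R d := (g_sigma_algebraType (@open (matrix R 1 d))) (only parsing).

Definition sphere (R : realType) (d : nat) : set 'rV[R]_d :=
  [set x | \sum_(j < d) x 0 j ^+ 2 = 1].
Arguments sphere {R} d.

(* A configuration (x_1, ..., x_k) of k points of R^d is encoded as the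
   k x d matrix whose i-th row is x_(i+1).  sphere_config is (S^{d-1})^k. *)
Definition sphere_config (R : realType) (d k : nat) : set 'M[R]_(k, d) :=
  [set M | forall i : 'I_k, sphere d (row i M)].
Arguments sphere_config {R} d k.

(* Iterated integral of F over S^{d-1} w.r.t. mu in the n variables
   s 0, ..., s (n-1) (the remaining ones are irrelevant). *)
Fixpoint iter_int (R : realType) (d : nat)
    (mu : {measure set (Rd R d) -> \bar R}) (n : nat)
    (F : (nat -> 'rV[R]_d) -> R) : R :=
  match n with
  | 0 => F (fun _ => 0)
  | n'.+1 => Rintegral mu (sphere d : set (Rd R d))
      (fun x : Rd R d => iter_int mu n' (fun s => F (fun i => if i == n' then x else s i)))
  end.

Definition I_Y (R : realType) (d k : nat) (Y : 'M[R]_(k, d) -> R)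
    (mu : {measure set (Rd R d) -> \bar R}) : R :=
  iter_int mu k (fun s => Y (\matrix_(i < k, j < d) s (i : nat) 0 j)).

Definition with_first_two (R : realType) (d n : nat) (x y : 'rV[R]_d)
    (Z : 'M[R]_(n.+2, d)) : 'M[R]_(n.+2, d) :=
  \matrix_(i < n.+2, j < d)
    (if (i : nat) == 0%N then x 0 j else if (i : nat) == 1%N then y 0 j else Z i j).

Definition biint (R : realType) (d n : nat) (Y : 'M[R]_(n.+2, d) -> R)
    (Z : 'M[R]_(n.+2, d)) (alpha beta : {measure set (Rd R d) -> \bar R}) : R :=
  Rintegral alpha (sphere d : set (Rd R d)) (fun x : Rd R d =>
    Rintegral beta (sphere d : set (Rd R d)) (fun y : Rd R d =>
      Y (with_first_two x y Z))).

(* A finite signed Borel measure nu on S^{d-1} is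
   written as nu = alpha - beta (Jordan decomposition) with alpha, beta finite
   Borel measures, and \int\int Y d nu d nu is expanded bilinearly. *)
Definition k_positive_definite (R : realType) (d n : nat)
    (Y : 'M[R]_(n.+2, d) -> R) : Prop :=
  {within sphere_config d n.+2, continuous Y} /\
  (forall M, sphere_config d n.+2 M -> Y (xrow 0 1 M) = Y M) /\
  (forall Z : 'M[R]_(n.+2, d), sphere_config d n.+2 Z ->
   forall alpha beta : {finite_measure set (Rd R d) -> \bar R},
     0 <= biint Y Z alpha alpha - biint Y Z alpha beta
          - biint Y Z beta alpha + biint Y Z beta beta).

(* Main.v *)
Require Import Defs.
From HB Require Import structures.
From mathcomp Require Import all_boot all_order all_algebra.
From mathcomp Require Import all_classical all_reals all_analysis.
From mathcomp Require Import perm.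
Import Order.TTheory GRing.Theory Num.Theory.
Import numFieldNormedType.Exports.
Local Open Scope classical_set_scope.
Local Open Scope ring_scope.

Section S.
Variables (R : realType) (d : nat) (nu : {measure set (Rd R d) -> \bar R}).

Lemma iter_int_S m F : iter_int nu m.+1 F = Rintegral nu (sphere d : set (Rd R d))
  (fun x : Rd R d => iter_int nu m (fun s => F (fun i => if i == m then x else s i))).
Proof. by []. Qed.

Lemma iter_ge0 (m : nat) (G : (nat -> 'rV[R]_d) -> R) :
  (forall s : nat -> 'rV[R]_d, (forall i, (2 <= i < m.+2)%N -> sphere d (s i)) ->
     0 <= iter_int nu 2 (fun t => G (fun i => if (i < 2)%N then t i else s i))) ->
  0 <= iter_int nu m.+2 G.
Proof.
elim: m G => [|m IH] G H.
  have := H (fun _ => 0) ltac:(by move=> [|[|i]]).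
  congr (0 <= _); rewrite /=; congr Rintegral; apply: funext => x1.
  congr Rintegral; apply: funext => x0; congr G; apply: funext => i.
  by case: i => [|[|i]].
rewrite iter_int_S.
apply: Rintegral_ge0 => x Sx; apply: IH => s Hs.
have := H (fun i => if i == m.+2 then x else s i).
set t := iter_int _ _ _; move=> H'; have {H'}: 0 <= t.
  apply: H' => i /andP[i2 im]; case: eqP => // /eqP ne; apply: Hs.
  by rewrite i2 /= ltn_neqAle ne -ltnS.
congr (0 <= _); rewrite /t; congr iter_int; apply: funext => u.
congr G; apply: funext => i.
by case: (ltnP i 2) => i2; case: (i =P m.+2) => [e|e] //; subst i.
Qed.
End S.

Theorem proposition2p6 (R : realType) (d n : nat) (Y : 'M[R]_(n.+2, d) -> R)
    (mu : probability (Rd R d) R) :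
  k_positive_definite Y ->
  mu (~` (sphere d : set (Rd R d))) = 0%E ->
  I_Y Y mu = 0 ->
  forall nu : probability (Rd R d) R,
    nu (~` (sphere d : set (Rd R d))) = 0%E ->
    I_Y Y mu <= I_Y Y nu.
Proof.
move=> [_ [Ysym Ypd]] _ -> nu _.
rewrite /I_Y; apply: iter_ge0 => s Hs /=.
have [[p Sp]|nS] := pselect (exists p : 'rV[R]_d, sphere d p); last first.
  have -> : (sphere d : set (Rd R d)) = set0.
    by apply/seteqP; split => // x Sx; apply: nS; exists x.
  by rewrite Rintegral_set0.
set Z : 'M[R]_(n.+2, d) := \matrix_(i < n.+2, j < d)
   (if (i < 2)%N then p 0 j else s i 0 j).
have rowZ : forall x y : 'rV[R]_d, sphere d x -> sphere d y ->
   sphere_config d n.+2 (with_first_two x y Z).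
  move=> x y Sx Sy i; rewrite /sphere /=.
  case: i => [[|[|i]] Hi].
  - by rewrite -Sx; apply: eq_bigr => j _; rewrite !mxE.
  - by rewrite -Sy; apply: eq_bigr => j _; rewrite !mxE.
  - rewrite -(Hs i.+2) //; apply: eq_bigr => j _; rewrite !mxE //.
have SZ : sphere_config d n.+2 Z.
  move=> i; rewrite /sphere /=.
  case: i => [[|[|i]] Hi].
  - by rewrite -Sp; apply: eq_bigr => j _; rewrite !mxE.
  - by rewrite -Sp; apply: eq_bigr => j _; rewrite !mxE.
  - rewrite -(Hs i.+2) //; apply: eq_bigr => j _; rewrite !mxE //.
have R0 : forall (alpha : {measure set (Rd R d) -> \bar R}) (f : Rd R d -> Rd R d -> R),
    Rintegral alpha (sphere d : set (Rd R d)) (fun x => Rintegral mzero (sphere d : set (Rd R d)) (f x)) = 0.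
  move=> alpha f; rewrite /Rintegral; rewrite integral0_eq ?fine0 // => x _.
  by rewrite integral_measure_zero.
have R0' : forall (f : Rd R d -> Rd R d -> R),
    Rintegral mzero (sphere d : set (Rd R d)) (fun x => Rintegral nu (sphere d : set (Rd R d)) (f x)) = 0.
  by move=> f; rewrite /Rintegral integral_measure_zero.
have := Ypd Z SZ nu mzero.
rewrite /biint !R0 R0' !subr0 addr0.
move=> h; apply: (le_trans h); rewrite le_eqVlt; apply/orP; left; apply/eqP.
apply: eq_Rintegral => x; rewrite inE => Sx.
apply: eq_Rintegral => y; rewrite inE => Sy.
rewrite -Ysym; last exact: rowZ.
have v1 : nat_of_ord (1 : 'I_n.+2) = 1%N by rewrite /= modn_small.
have v0 : nat_of_ord (0 : 'I_n.+2) = 0%N by [].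
congr Y; apply/matrixP => i j; rewrite !mxE.
case: i => [[|[|i]] Hi].
- have -> : Ordinal Hi = 0 by apply: val_inj.
  by rewrite tpermL /= ?v1 ?v0.
- have -> : Ordinal Hi = 1 by apply: val_inj.
  by rewrite tpermR /= ?v1 ?v0.
- rewrite tpermD; last 2 first.
  + by apply/eqP => /(congr1 val).
  + by apply/eqP => /(congr1 val).
  by rewrite /= ?v1 ?v0.
Qed.
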